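(* Let $A$ be an absolute-valued algebra with left unit $e$, whose norm comes from the inner product $\langle\cdot|\cdot\rangle$, and assume $x^2e=x^2$ for all $x\in A$. Then (1) $(x^2)^2=-\|x\|^4e+2\langle e|x^2\rangle x^2$ for all $x\in A$; (2) $x^2(xe)=\|x\|^2x+2\langle e|x^2\rangle xe$ for all $x\in A$ orthogonal to $e$.
   Context: An absolute-valued algebra is a nonzero real algebra with a norm satisfying $\|xy\|=\|x\|\|y\|$; when it has a left unit $e$ ($ex=x$ for all $x$), its norm is induced by an inner product $\langle\cdot|\cdot\rangle$ with $\|x\|^2=\langle x|x\rangle$. *)

(* Defs.v *)
From HB Require Import structures.
From mathcomp Require Import all_boot all_order all_algebra.
From mathcomp Require Import reals.
Set Implicit Arguments. Unset Strict Implicit. Unset Printing Implicit Defensive.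
Import Order.TTheory GRing.Theory Num.Theory.
Local Open Scope ring_scope.

Definition bilinear_mul (R : realType) (V : lmodType R) (mul : V -> V -> V) : Prop :=
  (forall (a : R) (x y z : V), mul (a *: x + y) z = a *: mul x z + mul y z) /\
  (forall (a : R) (x y z : V), mul x (a *: y + z) = a *: mul x y + mul x z).

Definition inner_product (R : realType) (V : lmodType R) (ip : V -> V -> R) : Prop :=
  (forall x y : V, ip x y = ip y x) /\
  (forall (a : R) (x y z : V), ip (a *: x + y) z = a * ip x z + ip y z) /\
  (forall x : V, 0 <= ip x x) /\
  (forall x : V, ip x x = 0 -> x = 0).

Definition ipnorm (R : realType) (V : lmodType R) (ip : V -> V -> R) (x : V) : R :=
  Num.sqrt (ip x x).

Definition absolute_valued (R : realType) (V : lmodType R) (mul : V -> V -> V)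
  (ip : V -> V -> R) : Prop :=
  bilinear_mul mul /\ inner_product ip /\ (exists x : V, x <> 0) /\
  (forall x y : V, ipnorm ip (mul x y) = ipnorm ip x * ipnorm ip y).

Definition left_unit (R : realType) (V : lmodType R) (mul : V -> V -> V) (e : V) : Prop :=
  forall x : V, mul e x = x.

(* Main.v *)
Require Import Defs.
From HB Require Import structures.
From mathcomp Require Import all_boot all_order all_algebra.
From mathcomp Require Import reals.
From mathcomp Require Import lra.
Import Order.TTheory GRing.Theory Num.Theory.
Local Open Scope ring_scope.

Theorem lemma5 (R : realType) (V : lmodType R) (mul : V -> V -> V)
  (ip : V -> V -> R) (e : V)
  (hA : absolute_valued mul ip) (he : left_unit mul e)
  (hsq : forall x : V, mul (mul x x) e = mul x x) :
  (forall x : V,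
     mul (mul x x) (mul x x)
     = - (ipnorm ip x ^+ 4) *: e + (2 * ip e (mul x x)) *: mul x x) /\
  (forall x : V, ip e x = 0 ->
     mul (mul x x) (mul x e)
     = (ipnorm ip x ^+ 2) *: x + (2 * ip e (mul x x)) *: mul x e).
Proof.
case: hA => [[bl br] [[isym [ilin [ipos idef]]] [_ hn]]].
have ip0 : forall z, ip 0 z = 0.
  move=> z; have := ilin 1 0 0 z; rewrite scaler0 addr0 mul1r => H; lra.
have ipD : forall x y z, ip (x + y) z = ip x z + ip y z.
  by move=> x y z; have := ilin 1 x y z; rewrite scale1r mul1r.
have ipZ : forall a x z, ip (a *: x) z = a * ip x z.
  by move=> a x z; rewrite -[_ *: _]addr0 ilin ip0 addr0.
have ipDr : forall x y z, ip z (x + y) = ip z x + ip z y.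
  by move=> x y z; rewrite isym ipD -!(isym z).
have ipZr : forall a x z, ip z (a *: x) = a * ip z x.
  by move=> a x z; rewrite isym ipZ isym.
have ipB : forall x y z, ip (x - y) z = ip x z - ip y z.
  by move=> x y z; rewrite ipD -scaleN1r ipZ; lra.
have ipeq : forall u w, (forall z, ip u z = ip w z) -> u = w.
  move=> u w H; apply/eqP; rewrite -subr_eq0; apply/eqP/idef.
  by rewrite ipB H subrr.
have mul0l : forall z, mul 0 z = 0.
  move=> z; have := bl 1 0 0 z; rewrite scaler0 addr0 scale1r => H.
  by move: H; rewrite -[X in X = _]addr0 => /addrI.
have mul0r : forall z, mul z 0 = 0.
  move=> z; have := br 1 z 0 0; rewrite scaler0 addr0 scale1r => H.
  by move: H; rewrite -[X in X = _]addr0 => /addrI.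
have mulDl : forall x y z, mul (x + y) z = mul x z + mul y z.
  by move=> x y z; have := bl 1 x y z; rewrite !scale1r.
have mulDr : forall x y z, mul z (x + y) = mul z x + mul z y.
  by move=> x y z; have := br 1 z x y; rewrite !scale1r.
have N : forall x y, ip (mul x y) (mul x y) = ip x x * ip y y.
  move=> x y; have := hn x y; rewrite /ipnorm => H.
  by rewrite -(sqr_sqrtr (ipos _)) H exprMn !sqr_sqrtr.
have P1 : forall a x y, ip (mul a x) (mul a y) = ip a a * ip x y.
  move=> a x y; have := N a (x + y).
  rewrite mulDr !ipD !ipDr !N (isym (mul a y)) (isym y x) => H; lra.
have P2 : forall a b x y,
    ip (mul a x) (mul b y) + ip (mul b x) (mul a y) = 2 * ip a b * ip x y.
  move=> a b x y; have := P1 (a + b) x y.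
  rewrite !mulDl !ipD !ipDr !P1 (isym b a) => H; lra.
have Adj : forall a x y, ip (mul a x) y + ip x (mul a y) = 2 * ip a e * ip x y.
  by move=> a x y; have := P2 a e x y; rewrite !he.
have LL : forall a y,
    mul a (mul a y) = (2 * ip a e) *: mul a y - ip a a *: y.
  move=> a y; apply: ipeq => z.
  have := Adj a (mul a y) z; rewrite P1 ipB !ipZ => H; lra.
have LL2 : forall a b y,
    mul a (mul b y) + mul b (mul a y)
    = (2 * ip a e) *: mul b y + (2 * ip b e) *: mul a y - (2 * ip a b) *: y.
  move=> a b y; apply: ipeq => z.
  have := Adj a (mul b y) z; have := Adj b (mul a y) z; have := P2 a b y z.
  rewrite ipB !ipD !ipZ (isym (mul a y) (mul b z)) (isym (mul b y) (mul a z)).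
  move=> H1 H2 H3; lra.
have nx2 : forall x, ipnorm ip x ^+ 2 = ip x x.
  by move=> x; rewrite /ipnorm sqr_sqrtr.
split.
  move=> x; have := LL (mul x x) e; rewrite hsq => ->.
  rewrite N (_ : 4 = 2 * 2)%N // exprM nx2 (isym e) expr2.
  by rewrite addrC scaleNr.
move=> x hx.
have hx' : ip x e = 0 by rewrite isym.
have := LL2 (mul x x) x e; rewrite hsq LL hx' mulr0 !scale0r sub0r addr0.
have hxx : ip (mul x x) x = 0.
  by have := Adj x x x; rewrite hx' (isym x (mul x x)); lra.
rewrite hxx mulr0 scale0r subr0.
rewrite nx2 (isym e) => H.
by rewrite -H addrC subrK.
Qed.
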